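(* Under the standing assumptions below, exactly one of the following holds: either there exist a map $u_1:M\to M'$ and a fixed $b'_1\in N'$ such that $\phi\left(\left[\begin{smallmatrix} 1 & m\\ 0 & 0\end{smallmatrix}\right]\right)=\left[\begin{smallmatrix} 1 & u_1(m)\\ b'_1 & 0\end{smallmatrix}\right]$ for all $m\in M$; or there exist a map $v_2:M\to N'$ and a fixed $a'_2\in M'$ such that $\phi\left(\left[\begin{smallmatrix} 1 & m\\ 0 & 0\end{smallmatrix}\right]\right)=\left[\begin{smallmatrix} 0 & a'_2\\ v_2(m) & 1\end{smallmatrix}\right]$ for all $m\in M$.
   Context: All rings have an identity $1\neq 0$. Standing assumptions: $R,S,R',S'$ are rings whose only idempotents are $0$ and $1$; $M$ is an $R$-$S$-bimodule, $N$ an $S$-$R$-bimodule, $M'$ an $R'$-$S'$-bimodule, $N'$ an $S'$-$R'$-bimodule; $T=\left[\begin{smallmatrix} R & M\\ N & S\end{smallmatrix}\right]$ and $T'=\left[\begin{smallmatrix} R' & M'\\ N' & S'\end{smallmatrix}\right]$ are the Morita context rings with both Morita maps zero, i.e. the sets of formal matrices with entrywise addition and product $\left[\begin{smallmatrix} r & m\\ n & s\end{smallmatrix}\right]\left[\begin{smallmatrix} r' & m'\\ n' & s'\end{smallmatrix}\right]=\left[\begin{smallmatrix} rr' & rm'+ms'\\ nr'+sn' & ss'\end{smallmatrix}\right]$; and $\phi:T\to T'$ is a ring isomorphism. *)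

(* Defs.v *)
From HB Require Import structures.
From mathcomp Require Import all_boot all_order all_algebra.
Set Implicit Arguments. Unset Strict Implicit. Unset Printing Implicit Defensive.
Import GRing.Theory.
Local Open Scope ring_scope.

Definition only_trivial_idempotents (R : nzRingType) : Prop :=
  forall e : R, e * e = e -> e = 0 \/ e = 1.

Record bimodule (R S : nzRingType) (M : zmodType) := Bimodule {
  lact : R -> M -> M;
  ract : M -> S -> M;
  lact1 : forall m, lact 1 m = m;
  lactM : forall r1 r2 m, lact (r1 * r2) m = lact r1 (lact r2 m);
  lactDl : forall r1 r2 m, lact (r1 + r2) m = lact r1 m + lact r2 m;
  lactDr : forall r m1 m2, lact r (m1 + m2) = lact r m1 + lact r m2;
  ract1 : forall m, ract m 1 = m;
  ractM : forall m s1 s2, ract m (s1 * s2) = ract (ract m s1) s2;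
  ractDl : forall m1 m2 s, ract (m1 + m2) s = ract m1 s + ract m2 s;
  ractDr : forall m s1 s2, ract m (s1 + s2) = ract m s1 + ract m s2;
  lract : forall r m s, ract (lact r m) s = lact r (ract m s)
}.

(* Elements of the Morita context ring [[R, M], [N, S]] (both Morita maps zero). *)
Record mctx (R S : nzRingType) (M N : zmodType) := MC {
  m11 : R; m12 : M; m21 : N; m22 : S
}.

Section MoritaOps.
Variables (R S : nzRingType) (M N : zmodType).
Variables (BM : bimodule R S M) (BN : bimodule S R N).

Definition mc_add (x y : mctx R S M N) : mctx R S M N :=
  MC (m11 x + m11 y) (m12 x + m12 y) (m21 x + m21 y) (m22 x + m22 y).

Definition mc_mul (x y : mctx R S M N) : mctx R S M N :=
  MC (m11 x * m11 y)
     (lact BM (m11 x) (m12 y) + ract BM (m12 x) (m22 y))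
     (ract BN (m21 x) (m11 y) + lact BN (m22 x) (m21 y))
     (m22 x * m22 y).

Definition mc_one : mctx R S M N := MC 1 0 0 1.
End MoritaOps.

Definition mc_ring_iso (R S R' S' : nzRingType) (M N M' N' : zmodType)
  (BM : bimodule R S M) (BN : bimodule S R N)
  (BM' : bimodule R' S' M') (BN' : bimodule S' R' N')
  (phi : mctx R S M N -> mctx R' S' M' N') : Prop :=
  bijective phi /\
  (forall x y, phi (mc_add x y) = mc_add (phi x) (phi y)) /\
  (forall x y, phi (mc_mul BM BN x y) = mc_mul BM' BN' (phi x) (phi y)) /\
  phi (mc_one R S M N) = mc_one R' S' M' N'.

(* Main.v *)
Require Import Defs.
From HB Require Import structures.
From mathcomp Require Import all_boot all_order all_algebra.
Import GRing.Theory.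
Local Open Scope ring_scope.

Lemma dbl0 (G : zmodType) (g : G) : g = g + g -> g = 0.
Proof. by move=> hg; apply/eqP; rewrite -(subrr g) {2}hg addrK. Qed.

Section Aux.
Variables (R S : nzRingType) (M : zmodType) (B : bimodule R S M).

Lemma lact0r m : lact B 0 m = 0.
Proof.
have h := lactDl B 0 0 m; rewrite addr0 in h.
exact: dbl0.
Qed.
Lemma lactr0 r : lact B r 0 = 0.
Proof.
have h := lactDr B r 0 0; rewrite addr0 in h.
exact: dbl0.
Qed.
Lemma ract0r m : ract B m 0 = 0.
Proof.
have h := ractDr B m 0 0; rewrite addr0 in h.
exact: dbl0.
Qed.
Lemma ractr0 s : ract B 0 s = 0.
Proof.
have h := ractDl B 0 0 s; rewrite addr0 in h.
exact: dbl0.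
Qed.
End Aux.

Lemma mc_eta {R S : nzRingType} {M N : zmodType} (x : mctx R S M N) :
  x = MC (m11 x) (m12 x) (m21 x) (m22 x).
Proof. by case: x. Qed.

Lemma idem_class {R S : nzRingType} {M N : zmodType}
  (BM : bimodule R S M) (BN : bimodule S R N)
  (hR : only_trivial_idempotents R) (hS : only_trivial_idempotents S)
  (x : mctx R S M N) :
  mc_mul BM BN x x = x -> x <> MC 0 0 0 0 -> x <> mc_one R S M N ->
  (m11 x = 1 /\ m22 x = 0) \/ (m11 x = 0 /\ m22 x = 1).
Proof.
case: x => a b c d /= E n0 n1.
have Ea : a * a = a by have := f_equal (@m11 _ _ _ _) E.
have Eb : lact BM a b + ract BM b d = b by have := f_equal (@m12 _ _ _ _) E.
have Ec : ract BN c a + lact BN d c = c by have := f_equal (@m21 _ _ _ _) E.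
have Ed : d * d = d by have := f_equal (@m22 _ _ _ _) E.
case: (hR a Ea) => Ha; case: (hS d Ed) => Hd; subst a d; auto.
- exfalso; apply: n0.
  rewrite lact0r ract0r addr0 in Eb; rewrite ract0r lact0r addr0 in Ec.
  by rewrite -Eb -Ec.
- exfalso; apply: n1; rewrite /mc_one.
  rewrite lact1 ract1 in Eb; rewrite ract1 lact1 in Ec.
  have hb : b = 0 by apply: dbl0.
  have hc : c = 0 by apply: dbl0.
  by rewrite hb hc.
Qed.

Theorem proposition4p3 (R S R' S' : nzRingType) (M N M' N' : zmodType)
  (BM : bimodule R S M) (BN : bimodule S R N)
  (BM' : bimodule R' S' M') (BN' : bimodule S' R' N')
  (hR : only_trivial_idempotents R) (hS : only_trivial_idempotents S)
  (hR' : only_trivial_idempotents R') (hS' : only_trivial_idempotents S')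
  (phi : mctx R S M N -> mctx R' S' M' N')
  (hphi : mc_ring_iso BM BN BM' BN' phi) :
  let A := exists (u1 : M -> M') (b1 : N'),
             forall m : M, phi (MC 1 m 0 0) = MC 1 (u1 m) b1 0 in
  let B := exists (v2 : M -> N') (a2 : M'),
             forall m : M, phi (MC 1 m 0 0) = MC 0 a2 (v2 m) 1 in
  (A /\ ~ B) \/ (~ A /\ B).
Proof.
case: hphi => [[psi Hl Hr] [Hadd [Hmul Hone]]] A B.
have inj : injective phi by exact: can_inj Hl.
have phi0 : phi (MC 0 0 0 0) = MC 0 0 0 0.
  have h := Hadd (MC 0 0 0 0) (MC 0 0 0 0).
  rewrite /mc_add /= !addr0 in h.
  rewrite (mc_eta (phi _)) in h *.
  case: h => h1 h2 h3 h4.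
  have z : forall (G : zmodType) (g : G), g = g + g -> g = 0.
    by move=> G g hg; apply/eqP; rewrite -(subrr g) {2}hg addrK.
  by rewrite -(z _ _ h1) -(z _ _ h2) -(z _ _ h3) -(z _ _ h4).
set x := fun m : M => MC (1 : R) m (0 : N) (0 : S).
have xmul : forall m n, mc_mul BM BN (x m) (x n) = x n.
  move=> m n; rewrite /mc_mul /x /= mulr1 mulr0 lact1 ract0r addr0.
  by rewrite ractr0 lactr0 addr0.
have idem : forall m, (m11 (phi (x m)) = 1 /\ m22 (phi (x m)) = 0) \/
                      (m11 (phi (x m)) = 0 /\ m22 (phi (x m)) = 1).
  move=> m; apply: (idem_class BM' BN' hR' hS').
  - by rewrite -Hmul xmul.
  - rewrite -phi0 => /inj h.
    have := f_equal (@m11 _ _ _ _) h => /= /eqP; by rewrite oner_eq0.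
  - rewrite -Hone => /inj h.
    have := f_equal (@m22 _ _ _ _) h => /= /eqP; by rewrite eq_sym oner_eq0.
have prod : forall m, mc_mul BM' BN' (phi (x 0)) (phi (x m)) = phi (x m).
  by move=> m; rewrite -Hmul xmul.
case: (idem 0) => [[h1 h2]|[h1 h2]].
- left; split.
  + exists (fun m => m12 (phi (x m))), (m21 (phi (x 0))) => m.
    have P := prod m.
    have P4 := f_equal (@m22 _ _ _ _) P.
    have P3 := f_equal (@m21 _ _ _ _) P.
    rewrite /mc_mul in P4 P3; cbn [m11 m12 m21 m22] in P4; cbn [m11 m12 m21 m22] in P3; rewrite ?h1 ?h2 in P4 P3.
    have d0 : m22 (phi (x m)) = 0 by rewrite -P4 mul0r.
    have a1 : m11 (phi (x m)) = 1.
      case: (idem m) => [[a _]|[_ a]] //.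
      by move: a; rewrite d0 => /eqP; rewrite eq_sym oner_eq0.
    have c0 : m21 (phi (x m)) = m21 (phi (x 0)).
      by rewrite -P3 a1 ract1 lact0r addr0.
    by rewrite [LHS]mc_eta a1 d0 c0.
  + case=> v2 [a2 H]; have E := H 0.
    move: h1; rewrite /x E /= => /eqP; by rewrite eq_sym oner_eq0.
- right; split.
  + case=> u1 [b1 H]; have E := H 0.
    move: h1; rewrite /x E /= => /eqP; by rewrite oner_eq0.
  + exists (fun m => m21 (phi (x m))), (m12 (phi (x 0))) => m.
    have P := prod m.
    have P1 := f_equal (@m11 _ _ _ _) P.
    have P2 := f_equal (@m12 _ _ _ _) P.
    rewrite /mc_mul in P1 P2; cbn [m11 m12 m21 m22] in P1; cbn [m11 m12 m21 m22] in P2; rewrite ?h1 ?h2 in P1 P2.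
    have a0 : m11 (phi (x m)) = 0 by rewrite -P1 mul0r.
    have d1 : m22 (phi (x m)) = 1.
      case: (idem m) => [[a _]|[_ a]] //.
      by move: a; rewrite a0 => /eqP; rewrite eq_sym oner_eq0.
    have b0 : m12 (phi (x m)) = m12 (phi (x 0)).
      by rewrite -P2 d1 ract1 lact0r add0r.
    by rewrite [LHS]mc_eta a0 d1 b0.
Qed.
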